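(* Let $P=[0,1]$. For the online cumulative distance (CD) problem in $P$, no (possibly randomized) online algorithm achieves a competitive ratio to $OPT_C$ better than $\Omega(n)$, where $n$ is the number of points.
   Context: Distances are Euclidean; $\partial P=\{0,1\}$. An instance is $S=((s_1,d_1),\dots,(s_n,d_n))$ with $s_i<d_i$, $0=s_1\le\dots\le s_n$; point $i$ is present at time $t$ iff $s_i\le t\le d_i$; $T=\max_i d_i$. For locations $X\in P^n$, $d_{min}(t;X)=\min\{dis(X_i,\partial P),dis(X_i,X_j)\}$ over present points $i\ne j$ at time $t$, and $OPT_C(S;P)=\max_X\int_0^T d_{min}(t;X)\,dt$. In the online problem, upon arrival of each point the algorithm irrevocably chooses its location without knowing future events or $n$; the events are chosen by an adaptive adversary knowing the algorithm. The competitive ratio on $S$ is $OPT_C(S;P)/\int_0^T d_{min}(t;X)\,dt$ for the algorithm's output $X$. *)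

(* Defs.v *)
From Stdlib Require Import Reals Lra Lia List.
From Coquelicot Require Import Coquelicot.
Import ListNotations.
Open Scope R_scope.

(* An instance is the list ((s_1,d_1),...,(s_n,d_n)); indices are 0-based. *)
Definition instance := list (R * R).

Definition arr (S : instance) (i : nat) : R := fst (nth i S (0, 0)).
Definition dep (S : instance) (i : nat) : R := snd (nth i S (0, 0)).

Definition valid_instance (S : instance) : Prop :=
  (forall i, (i < length S)%nat -> arr S i < dep S i) /\
  (S <> nil -> arr S 0 = 0) /\
  (forall i j, (i <= j)%nat -> (j < length S)%nat -> arr S i <= arr S j).

Definition presentb (S : instance) (t : R) (i : nat) : bool :=
  if Rle_dec (arr S i) t then (if Rle_dec t (dep S i) then true else false)
  else false.

Definition dis_bd (x : R) : R := Rmin (Rabs (x - 0)) (Rabs (x - 1)).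

Definition dvals (S : instance) (X : nat -> R) (t : R) : list R :=
  let n := length S in
  flat_map (fun i =>
     if presentb S t i then
       dis_bd (X i) ::
       flat_map (fun j =>
          if andb (presentb S t j) (negb (Nat.eqb i j)) then [Rabs (X i - X j)] else [])
         (seq 0 n)
     else []) (seq 0 n).

(* d_min(t;X); convention: 0 when no point is present *)
Definition dmin (S : instance) (X : nat -> R) (t : R) : R :=
  match dvals S X t with
  | [] => 0
  | v :: l => fold_right Rmin v l
  end.

Definition horizon (S : instance) : R := fold_right Rmax 0 (map snd S).

Definition cumdist (S : instance) (X : nat -> R) : R :=
  RInt (dmin S X) 0 (horizon S).

Definition OPT_C (S : instance) : Rbar :=
  Lub_Rbar (fun v => exists X : nat -> R,
              (forall i, (i < length S)%nat -> 0 <= X i <= 1) /\ v = cumdist S X).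

(* Information available to an online algorithm when point i arrives:
   arrival times s_1..s_i, and the departure times of earlier points that
   have already departed (d_j <= s_i).  Neither n nor future events. *)
Definition view (S : instance) (i : nat) : list (R * option R) :=
  map (fun j => (arr S j,
                 if Nat.ltb j i then
                   (if Rle_dec (dep S j) (arr S i) then Some (dep S j) else None)
                 else None))
      (seq 0 (Datatypes.S i)).

Definition online_alg (alg : instance -> nat -> R) : Prop :=
  (forall S i, valid_instance S -> (i < length S)%nat -> 0 <= alg S i <= 1) /\
  (forall S S' i, valid_instance S -> valid_instance S' ->
     (i < length S)%nat -> (i < length S')%nat ->
     view S i = view S' i -> alg S i = alg S' i).

Definition locs (alg : instance -> nat -> R) (S : instance) (k : nat) : list R :=
  map (alg S) (seq 0 k).

(* Adaptive (online) adversary: a strategy adv mapping the locations observed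
   so far to an instance.  S is the instance generated by the interaction of
   adv with alg if S is valid, is the adversary's final answer to all the
   locations, and everything revealed up to arrival i (the view at i, in
   particular the existence of an i-th point) was already fixed by adv after
   seeing only the first i locations. *)
Definition generated (adv : list R -> instance) (alg : instance -> nat -> R)
    (S : instance) : Prop :=
  valid_instance S /\
  S = adv (locs alg S (length S)) /\
  (forall i, (i < length S)%nat ->
     (i < length (adv (locs alg S i)))%nat /\
     view (adv (locs alg S i)) i = view S i).

(* Main.v *)
Require Import Defs.
From Stdlib Require Import Reals Lra Lia List ZArith Classical ClassicalEpsilon.
From Coquelicot Require Import Coquelicot.
Import ListNotations.
Open Scope R_scope.

Lemma pigeon : forall n (f : nat -> nat), (forall i, (i <= n)%nat -> (f i < n)%nat) ->
  exists i j, (i < j <= n)%nat /\ f i = f j.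
Proof.
  induction n as [|n IH]; intros f Hf.
  - specialize (Hf 0%nat (le_n 0)). lia.
  - destruct (classic (exists i, (i <= n)%nat /\ f i = f (S n))) as [[i [Hi He]]|Hno].
    + exists i, (S n). split; [lia|exact He].
    + set (g := fun i => if Nat.ltb (f i) (f (S n)) then f i else (f i - 1)%nat).
      assert (HfS := Hf (S n) (le_n _)).
      destruct (IH g) as [i [j [Hij Hg]]].
      * intros i Hi. unfold g. assert (f i <> f (S n)) by (intro; apply Hno; eauto).
        assert (Hfi := Hf i ltac:(lia)).
        destruct (Nat.ltb_spec (f i) (f (S n))); lia.
      * exists i, j. split; [lia|].
        assert (f i <> f (S n)) by (intro; apply Hno; exists i; split; [lia|auto]).
        assert (f j <> f (S n)) by (intro; apply Hno; exists j; split; [lia|auto]).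
        unfold g in Hg.
        destruct (Nat.ltb_spec (f i) (f (S n))); destruct (Nat.ltb_spec (f j) (f (S n))); lia.
Qed.

Definition bin (m : nat) (x : R) : nat := Nat.min (Z.to_nat (Int_part (x * INR m))) (m - 1).

Lemma bin_spec : forall m x, (1 <= m)%nat -> 0 <= x <= 1 ->
  (bin m x < m)%nat /\ INR (bin m x) <= x * INR m <= INR (bin m x) + 1.
Proof.
  intros m x Hm Hx.
  destruct (base_Int_part (x * INR m)) as [H1 H2].
  set (z := Int_part (x * INR m)) in *.
  assert (Hm1 : 1 <= INR m) by (apply (le_INR 1); lia).
  assert (Hxm : 0 <= x * INR m <= INR m) by nra.
  assert (Hz : (0 <= z)%Z) by (assert (Hz0 : (-1 < z)%Z) by (apply lt_IZR; simpl; lra); lia).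
  assert (Hzn : INR (Z.to_nat z) = IZR z) by (rewrite INR_IZR_INZ, Z2Nat.id; auto).
  unfold bin; fold z.
  destruct (Nat.le_ge_cases (Z.to_nat z) (m - 1)) as [Hle|Hge].
  - rewrite Nat.min_l by lia. split; [lia|]. rewrite Hzn. lra.
  - rewrite Nat.min_r by lia. split; [lia|].
    rewrite minus_INR by lia. simpl INR.
    assert (INR (m-1) <= INR (Z.to_nat z)) by (apply le_INR; lia).
    rewrite minus_INR in H by lia. simpl INR in H. lra.
Qed.

Lemma close_pair : forall n (X : nat -> R), (2 <= n)%nat ->
  (forall k, (k < n)%nat -> 0 <= X k <= 1) ->
  exists q : nat * nat, (fst q < snd q < n)%nat /\ Rabs (X (fst q) - X (snd q)) * (INR n - 1) <= 1.
Proof.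
  intros n X Hn HX.
  destruct (pigeon (n - 1) (fun i => bin (n - 1) (X i))) as [i [j [Hij Hb]]].
  - intros i Hi. apply bin_spec; [lia| apply HX; lia].
  - exists (i, j). simpl. split; [lia|].
    destruct (bin_spec (n-1) (X i) ltac:(lia) (HX i ltac:(lia))) as [_ Hi].
    destruct (bin_spec (n-1) (X j) ltac:(lia) (HX j ltac:(lia))) as [_ Hj].
    rewrite Hb in Hi. rewrite minus_INR in Hi, Hj by lia. simpl INR in Hi, Hj.
    assert (0 <= INR n - 1) by (assert (1 <= INR n) by (apply (le_INR 1); lia); lra).
    rewrite <- (Rabs_pos_eq (INR n - 1)) by auto. rewrite <- Rabs_mult.
    apply Rabs_le. lra.
Qed.

Definition inst (n : nat) (p : nat * nat) : instance :=
  map (fun k => (0, if orb (Nat.eqb k (fst p)) (Nat.eqb k (snd p)) then 2 else 1)) (seq 0 n).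

Lemma inst_len n p : length (inst n p) = n.
Proof. unfold inst. rewrite length_map, length_seq. auto. Qed.

Lemma nth_inst n p k : nth k (inst n p) (0,0) =
  if Nat.ltb k n then (0, if orb (Nat.eqb k (fst p)) (Nat.eqb k (snd p)) then 2 else 1) else (0,0).
Proof.
  destruct (Nat.ltb_spec k n).
  - unfold inst.
    set (f := fun k => (0, if orb (Nat.eqb k (fst p)) (Nat.eqb k (snd p)) then 2 else 1)).
    rewrite (nth_indep _ _ (f 0%nat)) by (rewrite length_map, length_seq; auto).
    rewrite map_nth, seq_nth by auto. reflexivity.
  - apply nth_overflow. rewrite inst_len. auto.
Qed.

Lemma arr_inst n p k : arr (inst n p) k = 0.
Proof. unfold arr. rewrite nth_inst. destruct (Nat.ltb k n); reflexivity. Qed.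

Lemma dep_inst n p k : dep (inst n p) k =
  if Nat.ltb k n then (if orb (Nat.eqb k (fst p)) (Nat.eqb k (snd p)) then 2 else 1) else 0.
Proof. unfold dep. rewrite nth_inst. destruct (Nat.ltb k n); reflexivity. Qed.

Lemma dep_inst_pos n p k : (k < n)%nat -> 1 <= dep (inst n p) k.
Proof.
  intro H. rewrite dep_inst. apply Nat.ltb_lt in H. rewrite H.
  destruct (orb _ _); lra.
Qed.

Lemma inst_valid n p : valid_instance (inst n p).
Proof.
  split; [|split].
  - intros i Hi. rewrite inst_len in Hi. rewrite arr_inst. pose proof (dep_inst_pos n p i Hi). lra.
  - intros _. apply arr_inst.
  - intros. rewrite !arr_inst. lra.
Qed.

Lemma view_inst n p i : (i < n)%nat ->
  view (inst n p) i = map (fun _ => (0, @None R)) (seq 0 (S i)).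
Proof.
  intro Hi. unfold view. apply map_ext_in. intros j Hj.
  apply in_seq in Hj. rewrite !arr_inst. f_equal.
  destruct (Nat.ltb j i); auto.
  pose proof (dep_inst_pos n p j ltac:(lia)).
  destruct (Rle_dec (dep (inst n p) j) 0); auto. lra.
Qed.

Lemma fold_min_le : forall l v x, In x (v :: l) -> fold_right Rmin v l <= x.
Proof.
  induction l as [|a l IH]; intros v x Hx; simpl in *.
  - destruct Hx as [<-|[]]. lra.
  - destruct Hx as [<-|[<-|Hx]].
    + eapply Rle_trans; [apply Rmin_r|]. apply IH. left; auto.
    + apply Rmin_l.
    + eapply Rle_trans; [apply Rmin_r|]. apply IH. right; auto.
Qed.

Lemma fold_min_ge : forall l v a, (forall x, In x (v :: l) -> a <= x) -> a <= fold_right Rmin v l.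
Proof.
  induction l as [|x l IH]; intros v a H; simpl.
  - apply H. left; auto.
  - apply Rmin_glb. apply H. right; left; auto.
    apply IH. intros y [<-|Hy]; apply H; simpl; auto.
Qed.

Lemma in_dvals S X t v : In v (dvals S X t) ->
  exists i, (i < length S)%nat /\ presentb S t i = true /\
   (v = dis_bd (X i) \/ exists j, (j < length S)%nat /\ presentb S t j = true /\ i <> j /\
      v = Rabs (X i - X j)).
Proof.
  unfold dvals. rewrite in_flat_map. intros [i [Hi Hv]].
  apply in_seq in Hi. exists i. split; [lia|].
  destruct (presentb S t i) eqn:Hp; [|destruct Hv].
  split; auto. destruct Hv as [<-|Hv]; [left; auto|right].
  rewrite in_flat_map in Hv. destruct Hv as [j [Hj Hv]]. apply in_seq in Hj.
  exists j. split; [lia|].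
  destruct (presentb S t j) eqn:Hq; simpl in Hv; [|destruct Hv].
  destruct (Nat.eqb_spec i j); simpl in Hv; [destruct Hv|].
  destruct Hv as [<-|[]]. auto.
Qed.

Lemma dmin_le_pair S X t a b : (a < length S)%nat -> (b < length S)%nat -> a <> b ->
  presentb S t a = true -> presentb S t b = true -> dmin S X t <= Rabs (X a - X b).
Proof.
  intros Ha Hb Hab Pa Pb.
  assert (HI : In (Rabs (X a - X b)) (dvals S X t)).
  { unfold dvals. rewrite in_flat_map. exists a. split; [apply in_seq; lia|].
    rewrite Pa. right. rewrite in_flat_map. exists b. split; [apply in_seq; lia|].
    rewrite Pb. destruct (Nat.eqb_spec a b); [contradiction|]. simpl. auto. }
  unfold dmin. destruct (dvals S X t) as [|v l]; [destruct HI|]. apply fold_min_le; auto.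
Qed.

Lemma dmin_ge S X t c : 0 <= c ->
  (forall v, In v (dvals S X t) -> c <= v) -> (exists v, In v (dvals S X t)) -> c <= dmin S X t.
Proof.
  intros Hc H [w Hw]. unfold dmin. destruct (dvals S X t) as [|v l]; [destruct Hw|].
  apply fold_min_ge. auto.
Qed.

Lemma dmin_nonneg S X t : 0 <= dmin S X t.
Proof.
  unfold dmin. destruct (dvals S X t) as [|v l] eqn:E; [lra|].
  apply fold_min_ge. intros x Hx. rewrite <- E in Hx.
  destruct (in_dvals _ _ _ _ Hx) as [i [_ [_ [->|[j [_ [_ [_ ->]]]]]]]].
  - unfold dis_bd. apply Rmin_glb; apply Rabs_pos.
  - apply Rabs_pos.
Qed.

Lemma dvals_ext S X t t' : (forall k, presentb S t k = presentb S t' k) -> dvals S X t = dvals S X t'.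
Proof.
  intro H. unfold dvals. apply flat_map_ext. intro i. rewrite H.
  destruct (presentb S t' i); auto. f_equal. apply flat_map_ext. intro j. rewrite H. auto.
Qed.

Lemma dmin_ext S X t t' : (forall k, presentb S t k = presentb S t' k) -> dmin S X t = dmin S X t'.
Proof. intro H. unfold dmin. rewrite (dvals_ext S X t t' H). auto. Qed.

Lemma presentb_inst n p t k : presentb (inst n p) t k =
  if Rle_dec 0 t then (if Rle_dec t (dep (inst n p) k) then true else false) else false.
Proof. unfold presentb. rewrite arr_inst. auto. Qed.

Lemma dep_inst_cases n p k : dep (inst n p) k = 0 \/ dep (inst n p) k = 1 \/ dep (inst n p) k = 2.
Proof. rewrite dep_inst. destruct (Nat.ltb k n); [destruct (orb _ _)|]; auto. Qed.

Lemma fold_max_le : forall l (c : R), 0 <= c -> (forall x, In x l -> x <= c) -> fold_right Rmax 0 l <= c.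
Proof.
  induction l as [|a l IH]; intros c Hc H; simpl; auto.
  apply Rmax_lub. apply H; left; auto. apply IH; auto. intros; apply H; right; auto.
Qed.

Lemma fold_max_ge : forall l (x : R), In x l -> x <= fold_right Rmax 0 l.
Proof.
  induction l as [|a l IH]; intros x H; simpl in *; [destruct H|].
  destruct H as [<-|H]. apply Rmax_l. eapply Rle_trans; [apply IH; eauto|apply Rmax_r].
Qed.

Lemma horizon_inst n p : (fst p < n)%nat -> horizon (inst n p) = 2.
Proof.
  intro Hp. unfold horizon. apply Rle_antisym.
  - apply fold_max_le; [lra|]. intros x Hx. apply in_map_iff in Hx.
    destruct Hx as [[a d] [<- Hx]]. unfold inst in Hx. apply in_map_iff in Hx.
    destruct Hx as [k [Hk _]]. injection Hk as _ <-. simpl. destruct (orb _ _); lra.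
  - apply fold_max_ge. apply in_map_iff. exists (0, 2). split; auto.
    unfold inst. apply in_map_iff. exists (fst p). rewrite Nat.eqb_refl. simpl. split; auto.
    apply in_seq. lia.
Qed.

Lemma cumdist_inst n p X : (fst p < n)%nat ->
  cumdist (inst n p) X = dmin (inst n p) X (1/2) + dmin (inst n p) X (3/2).
Proof.
  intro Hp. unfold cumdist. rewrite horizon_inst by auto.
  set (S := inst n p).
  assert (E1 : forall x, Rmin 0 1 < x < Rmax 0 1 -> dmin S X x = dmin S X (1/2)).
  { intros x Hx. rewrite Rmin_left in Hx by lra. rewrite Rmax_right in Hx by lra.
    apply dmin_ext. intro k. unfold S. rewrite !presentb_inst.
    destruct (dep_inst_cases n p k) as [E|[E|E]]; rewrite E;
    repeat destruct Rle_dec; auto; lra. }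
  assert (E2 : forall x, Rmin 1 2 < x < Rmax 1 2 -> dmin S X x = dmin S X (3/2)).
  { intros x Hx. rewrite Rmin_left in Hx by lra. rewrite Rmax_right in Hx by lra.
    apply dmin_ext. intro k. unfold S. rewrite !presentb_inst.
    destruct (dep_inst_cases n p k) as [E|[E|E]]; rewrite E;
    repeat destruct Rle_dec; auto; lra. }
  assert (I1 : ex_RInt (dmin S X) 0 1).
  { eapply ex_RInt_ext; [|apply (ex_RInt_const 0 1 (dmin S X (1/2)))].
    intros x Hx; symmetry; auto. }
  assert (I2 : ex_RInt (dmin S X) 1 2).
  { eapply ex_RInt_ext; [|apply (ex_RInt_const 1 2 (dmin S X (3/2)))].
    intros x Hx; symmetry; auto. }
  rewrite <- (RInt_Chasles _ 0 1 2 I1 I2).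
  rewrite (RInt_ext _ _ 0 1 E1), (RInt_ext _ _ 1 2 E2), !RInt_const.
  unfold plus, scal; simpl. unfold mult; simpl. change (plus (mult (1-0) (dmin S X (1/2))) (mult (2-1) (dmin S X (3/2))) = dmin S X (1/2) + dmin S X (3/2)).
  unfold plus, mult; simpl. ring.
Qed.

Definition pick (n : nat) (X : nat -> R) : nat * nat :=
  epsilon (inhabits (0%nat, 0%nat))
    (fun q => (fst q < snd q < n)%nat /\ Rabs (X (fst q) - X (snd q)) * (INR n - 1) <= 1).

Definition advs (n : nat) (L : list R) : instance := inst n (pick n (fun k => nth k L 0)).

Lemma dis_bd_third y : (y = 1/3 \/ y = 2/3) -> 1/3 <= dis_bd y.
Proof.
  intros Hy. unfold dis_bd. apply Rmin_glb; unfold Rabs; destruct Rcase_abs; lra.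
Qed.

Theorem claim1 :
  exists c : R, 0 < c /\ exists N : nat,
  forall n : nat, (N <= n)%nat ->
  forall (Omega : Type) (A : Omega -> instance -> nat -> R),
    (forall w, online_alg (A w)) ->
    exists adv : list R -> instance,
      forall w, exists S : instance,
        length S = n /\ generated adv (A w) S /\
        Rbar_le (Finite (c * INR n * cumdist S (A w S))) (OPT_C S).
Proof.
  exists (1/12). split; [lra|]. exists 2%nat. intros n Hn Omega A HA.
  exists (advs n). intro w. set (alg := A w).
  destruct (HA w) as [Hr Hv]. fold alg in Hr, Hv.
  set (S0 := inst n (0%nat, 0%nat)).
  set (L := map (alg S0) (seq 0 n)).
  set (X := fun k => nth k L 0).
  assert (HX : forall k, (k < n)%nat -> X k = alg S0 k).
  { intros k Hk. unfold X, L.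
    rewrite (nth_indep _ _ (alg S0 0%nat)) by (rewrite length_map, length_seq; auto).
    rewrite map_nth, seq_nth by auto. auto. }
  set (q := pick n X).
  assert (Hq : (fst q < snd q < n)%nat /\ Rabs (X (fst q) - X (snd q)) * (INR n - 1) <= 1).
  { unfold q, pick. apply epsilon_spec. apply close_pair; auto.
    intros k Hk. rewrite HX by auto. apply Hr; [apply inst_valid|]. unfold S0; rewrite inst_len; auto. }
  destruct q as [a b] eqn:Eq. simpl in Hq. destruct Hq as [Hab Hd].
  set (S := inst n (a, b)).
  assert (Halg : forall k, (k < n)%nat -> alg S k = alg S0 k).
  { intros k Hk. apply Hv; try apply inst_valid; unfold S, S0; rewrite ?inst_len; auto.
    rewrite !view_inst; auto. }
  assert (Hlocs : locs alg S n = L).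
  { unfold locs, L. apply map_ext_in. intros k Hk. apply in_seq in Hk. apply Halg. lia. }
  exists S. split; [unfold S; apply inst_len|]. split.
  - split; [apply inst_valid|]. unfold S at 1 3. rewrite inst_len. split.
    + rewrite Hlocs. unfold advs. fold X. fold q. rewrite Eq. reflexivity.
    + intros i Hi. assert (Hin : (i < n)%nat) by (revert Hi; unfold S; rewrite inst_len; auto). unfold advs. rewrite inst_len. split; [exact Hin|]. unfold S; rewrite !view_inst; auto.
  -
    assert (Pres : forall t k, (k = a \/ k = b) -> 0 <= t <= 2 -> presentb S t k = true).
    { intros t k Hk Ht. unfold S. rewrite presentb_inst, dep_inst.
      assert (Hkn : Nat.ltb k n = true) by (apply Nat.ltb_lt; lia). rewrite Hkn.
      assert (Ho : orb (Nat.eqb k (fst (a,b))) (Nat.eqb k (snd (a,b))) = true).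
      { simpl. destruct Hk as [->| ->]; rewrite Nat.eqb_refl; auto using Bool.orb_true_r. }
      rewrite Ho. repeat destruct Rle_dec; auto; lra. }
    assert (HlenS : length S = n) by apply inst_len.
    assert (Hd' : Rabs (alg S a - alg S b) * (INR n - 1) <= 1).
    { rewrite !Halg by lia. rewrite <- !HX by lia. auto. }
    assert (HALG : cumdist S (alg S) <= 2 * Rabs (alg S a - alg S b)).
    { unfold S. rewrite cumdist_inst by (simpl; lia). fold S.
      pose proof (dmin_le_pair S (alg S) (1/2) a b ltac:(rewrite HlenS; lia) ltac:(rewrite HlenS; lia) ltac:(lia)
                   (Pres (1/2) a ltac:(auto) ltac:(lra)) (Pres (1/2) b ltac:(auto) ltac:(lra))).
      pose proof (dmin_le_pair S (alg S) (3/2) a b ltac:(rewrite HlenS; lia) ltac:(rewrite HlenS; lia) ltac:(lia)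
                   (Pres (3/2) a ltac:(auto) ltac:(lra)) (Pres (3/2) b ltac:(auto) ltac:(lra))).
      lra. }
    assert (Hab1 : Rabs (alg S a - alg S b) <= 1).
    { assert (Ha := Hr S a (inst_valid _ _) ltac:(lia)).
      assert (Hb := Hr S b (inst_valid _ _) ltac:(lia)).
      apply Rabs_le. lra. }
    set (Xo := fun k => if Nat.eqb k a then 1/3 else if Nat.eqb k b then 2/3 else 0).
    assert (HXo : forall k, 0 <= Xo k <= 1).
    { intro k. unfold Xo. destruct (Nat.eqb k a); [|destruct (Nat.eqb k b)]; lra. }
    assert (PresInv : forall k, presentb S (3/2) k = true -> k = a \/ k = b).
    { intros k Hk. unfold S in Hk. rewrite presentb_inst, dep_inst in Hk.
      destruct (Nat.ltb k n); [|repeat destruct Rle_dec in Hk; try discriminate; lra].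
      simpl in Hk. destruct (Nat.eqb_spec k a); auto. destruct (Nat.eqb_spec k b); auto.
      simpl in Hk. repeat destruct Rle_dec in Hk; try discriminate; lra. }
    assert (XoV : forall k, (k = a \/ k = b) -> Xo k = 1/3 /\ k = a \/ Xo k = 2/3 /\ k = b).
    { intros k Hk. unfold Xo. destruct (Nat.eqb_spec k a); [left; split; auto|].
      destruct (Nat.eqb_spec k b); [right; split; auto|]. lia. }
    assert (HOPT : 1/3 <= cumdist S Xo).
    { unfold S. rewrite cumdist_inst by (simpl; lia). fold S.
      pose proof (dmin_nonneg S Xo (1/2)).
      assert (1/3 <= dmin S Xo (3/2)); [|lra].
      apply dmin_ge; [lra| |].
      - intros v Hv'. destruct (in_dvals _ _ _ _ Hv') as [i [_ [Pi [->|[j [_ [Pj [Hij ->]]]]]]]].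
        + apply dis_bd_third. destruct (XoV i (PresInv i Pi)) as [[-> _]|[-> _]]; auto.
        + destruct (XoV i (PresInv i Pi)) as [[Ei Ei']|[Ei Ei']];
          destruct (XoV j (PresInv j Pj)) as [[Ej Ej']|[Ej Ej']]; try lia;
          rewrite Ei, Ej; unfold Rabs; destruct Rcase_abs; lra.
      - exists (dis_bd (Xo a)). unfold dvals. apply in_flat_map. exists a.
        split; [apply in_seq; rewrite HlenS; lia|]. rewrite (Pres (3/2) a ltac:(auto) ltac:(lra)). left; auto. }
    eapply Rbar_le_trans; [|apply (proj1 (Lub_Rbar_correct _)); exists Xo; split; [intros; apply HXo|reflexivity]].
    simpl.
    assert (Hn2 : 2 <= INR n) by (apply (le_INR 2); lia).
    set (d := Rabs (alg S a - alg S b)) in *.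
    assert (0 <= d) by apply Rabs_pos.
    apply Rle_trans with (1/12 * INR n * (2 * d)).
    + apply Rmult_le_compat_l; [nra|]. auto.
    + nra.
Qed.
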